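(* Let $\mathcal{A}=\{H_1,\dots,H_n\}$ be an arrangement of distinct lines in $\mathbb{P}^2_{\mathbb{C}}$ and let $\mathcal{A}_t=\{H_1,\dots,H_t\}$ for $t=1,\dots,n$. If $|H_t\cap\operatorname{mult}(\mathcal{A}_t)|\le 2$ for all $t=1,\dots,n$, then $\mathcal{R}(I(\mathcal{A}))$ is irreducible.
   Context: Lines $H_i=\{a_ix+b_iy+c_iz=0\}$ are identified with points $(a_i:b_i:c_i)\in(\mathbb{P}^2)^*$; $\det(H_i,H_j,H_k)$ is the determinant of the matrix of their coefficient rows. The incidence is $I(\mathcal{A})=\{\{i,j,k\}: i,j,k \text{ distinct},\ H_i\cap H_j\cap H_k\ne\emptyset\}$. For a set $I$ of 3-subsets of $\{1,\dots,n\}$, $\mathcal{R}(I)=\{(H_1,\dots,H_n)\in((\mathbb{P}^2)^* )^n: H_i\ne H_j\ (i\ne j),\ \det(H_i,H_j,H_k)=0 \text{ iff } \{i,j,k\}\in I\}$, with the Zariski topology. $\operatorname{mult}(\mathcal{A})$ is the set of points lying on at least three lines of $\mathcal{A}$. *)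

(* Defs.v *)
From HB Require Import structures.
From mathcomp Require Import all_boot all_order all_algebra.
Set Implicit Arguments. Unset Strict Implicit. Unset Printing Implicit Defensive.
Import Order.TTheory GRing.Theory Num.Theory.
Local Open Scope ring_scope.

Section Defs.
Variable C : numClosedFieldType.

(* A point of P^2 or of (P^2)^* is represented by a nonzero row vector of C^3. *)
Definition dot (a b : 'rV[C]_3) : C := \sum_(j < 3) a 0 j * b 0 j.

Definition same_point (a b : 'rV[C]_3) : Prop :=
  a != 0 /\ b != 0 /\ exists l : C, b = l *: a.

Definition det3 (a b c : 'rV[C]_3) : C :=
  \det (\matrix_(r < 3, s < 3) (nth 0 [:: a; b; c] r) 0 s).

Variable n : nat.

Definition incidence (H : 'I_n -> 'rV[C]_3) (S : {set 'I_n}) : Prop :=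
  #|S| = 3%N /\ exists p : 'rV[C]_3, p != 0 /\ forall i, i \in S -> dot (H i) p = 0.

(* representatives of points of the realization space R(I) in ((P^2)^* )^n *)
Definition realization (I : {set 'I_n} -> Prop) (G : 'I_n -> 'rV[C]_3) : Prop :=
  (forall i, G i != 0) /\
  (forall i j, i != j -> ~ same_point (G i) (G j)) /\
  (forall i j k, i != j -> j != k -> i != k ->
     (det3 (G i) (G j) (G k) = 0 <-> I [set i; j; k])).

Inductive polyfun : ((('I_n -> 'rV[C]_3) -> C) -> Prop) :=
| pf_const (c : C) : polyfun (fun _ => c)
| pf_coord (i : 'I_n) (j : 'I_3) : polyfun (fun G => G i 0 j)
| pf_add f g : polyfun f -> polyfun g -> polyfun (fun G => f G + g G)
| pf_mul f g : polyfun f -> polyfun g -> polyfun (fun G => f G * g G).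

(* Zariski-closed subsets of ((P^2)^* )^n, described through their preimage in
   (C^3 \ 0)^n: invariant under rescaling each factor, and closed in the
   (subspace) Zariski topology of (C^3 \ 0)^n. *)
Definition proj_closed (Z : ('I_n -> 'rV[C]_3) -> Prop) : Prop :=
  (forall (G : 'I_n -> 'rV[C]_3) (lam : 'I_n -> C),
      (forall i, G i != 0) -> (forall i, lam i != 0) ->
      (Z G <-> Z (fun i => lam i *: G i))) /\
  exists F : (('I_n -> 'rV[C]_3) -> C) -> Prop,
    (forall f, F f -> polyfun f) /\
    (forall G, (forall i, G i != 0) -> (Z G <-> forall f, F f -> f G = 0)).

Definition irreducible (R : ('I_n -> 'rV[C]_3) -> Prop) : Prop :=
  (exists G, R G) /\
  forall Z1 Z2, proj_closed Z1 -> proj_closed Z2 ->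
    (forall G, R G -> Z1 G \/ Z2 G) ->
    (forall G, R G -> Z1 G) \/ (forall G, R G -> Z2 G).

(* p (nonzero) lies in mult(A_t), A_t = {H_i : i <= t} (0-based indices) *)
Definition in_mult (H : 'I_n -> 'rV[C]_3) (t : 'I_n) (p : 'rV[C]_3) : Prop :=
  p != 0 /\ exists i j k : 'I_n,
    [/\ (i <= t)%N, (j <= t)%N & (k <= t)%N] /\ [/\ i != j, j != k & i != k] /\
    [/\ dot (H i) p = 0, dot (H j) p = 0 & dot (H k) p = 0].

(* |H_t ∩ mult(A_t)| <= 2, counting projective points *)
Definition meet_mult_le2 (H : 'I_n -> 'rV[C]_3) (t : 'I_n) : Prop :=
  forall p1 p2 p3 : 'rV[C]_3,
    (dot (H t) p1 = 0 /\ in_mult H t p1) ->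
    (dot (H t) p2 = 0 /\ in_mult H t p2) ->
    (dot (H t) p3 = 0 /\ in_mult H t p3) ->
    same_point p1 p2 \/ same_point p1 p3 \/ same_point p2 p3.

End Defs.

(* Main.v *)
Require Import Defs.
From HB Require Import structures.
From mathcomp Require Import all_boot all_order all_algebra.
From Stdlib Require Import Ring Classical FunctionalExtensionality.
Import GRing.Theory Num.Theory.
Local Open Scope ring_scope.

Section Main.
Set Implicit Arguments. Unset Strict Implicit.
Variable C : numClosedFieldType.
Lemma Cth : @ring_theory (Algebra.BaseAddMagma.sort (Num_ClosedField__to__Algebra_BaseAddMagma C)) 0 1 +%R *%R (fun x y => x - y) -%R eq.
Proof. constructor; intros; rewrite ?add0r ?mul1r ?mulrA ?addrA //.
all: try (by rewrite addrC); try (by rewrite mulrC); try (by rewrite mulrDl); try (by rewrite subrr).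
Qed.
Add Ring Cr : Cth.
Ltac canon :=
 repeat match goal with
 | |- context [@Algebra.add ?i] => assert_fails (constr_eq i (Num_ClosedField__to__Algebra_BaseAddMagma C)); change (@Algebra.add i) with (@Algebra.add (Num_ClosedField__to__Algebra_BaseAddMagma C))
 | |- context [@Algebra.opp ?i] => assert_fails (constr_eq i (Num_ClosedField__to__Algebra_BaseZmodule C)); change (@Algebra.opp i) with (@Algebra.opp (Num_ClosedField__to__Algebra_BaseZmodule C))
 | |- context [@GRing.mul ?i] => assert_fails (constr_eq i (Num_ClosedField__to__GRing_PzSemiRing C)); change (@GRing.mul i) with (@GRing.mul (Num_ClosedField__to__GRing_PzSemiRing C))
 | |- context [@Algebra.zero ?i] => assert_fails (constr_eq i (Num_ClosedField__to__Algebra_BaseAddUMagma C)); change (@Algebra.zero i) with (@Algebra.zero (Num_ClosedField__to__Algebra_BaseAddUMagma C))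
 | |- context [@GRing.one ?i] => assert_fails (constr_eq i (Num_ClosedField__to__GRing_PzSemiRing C)); change (@GRing.one i) with (@GRing.one (Num_ClosedField__to__GRing_PzSemiRing C))
 | |- @eq ?T ?x ?y => assert_fails (constr_eq T (Algebra.BaseAddMagma.sort (Num_ClosedField__to__Algebra_BaseAddMagma C))); change (@eq (Algebra.BaseAddMagma.sort (Num_ClosedField__to__Algebra_BaseAddMagma C)) x y)
 end.
Lemma wrap (x y : C) : x + 0 = y + 0 -> x = y. Proof. by rewrite !addr0. Qed.
Ltac cring := apply: wrap; canon; ring.

Lemma det33 (M : 'M[C]_3) : \det M =
 M 0 0 * (M 1 1 * M 2 2 - M 1 2 * M 2 1) - M 0 1 * (M 1 0 * M 2 2 - M 1 2 * M 2 0) + M 0 2 * (M 1 0 * M 2 1 - M 1 1 * M 2 0).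
Proof.
rewrite (expand_det_row _ 0) !big_ord_recr big_ord0 /=.
rewrite /cofactor !(expand_det_row _ 0) !big_ord_recr !big_ord0 /= /cofactor !det_mx11 !mxE /=.
pose f (i j : nat) : C := M (inord i) (inord j).
have ME : forall x y : 'I_3, M x y = f (val x) (val y) by move=> x y; rewrite /f !inord_val.
rewrite !ME /=.
repeat match goal with |- context [f ?a ?b] => let a' := eval vm_compute in a in let b' := eval vm_compute in b in progress change (f a b) with (f a' b') end.
repeat match goal with |- context [(-1) ^+ ?a] => let a' := eval vm_compute in a in progress change ((-1) ^+ a) with ((-1) ^+ a' : C) end.
rewrite ?exprS ?expr0 /=.
cring.
Qed.

Definition co (a : 'rV[C]_3) (k : nat) : C := a 0 (inord k).
Lemma coE (a : 'rV[C]_3) (x : 'I_3) : a 0 x = co a (val x).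
Proof. by rewrite /co inord_val. Qed.
Ltac nrm :=
  repeat match goal with |- context [co ?a ?k] => let k' := eval vm_compute in k in progress change (co a k) with (co a k') end.

Definition mk3 (x y z : C) : 'rV[C]_3 :=
  \row_(k < 3) (if val k == 0%N then x else if val k == 1%N then y else z).
Lemma mk3_0 x y z : co (mk3 x y z) 0 = x. Proof. by rewrite /co mxE; change (\val (inord 0 : 'I_3)) with (nat_of_ord (inord 0 : 'I_3)); rewrite inordK. Qed.
Lemma mk3_1 x y z : co (mk3 x y z) 1 = y. Proof. by rewrite /co mxE; change (\val (inord 1 : 'I_3)) with (nat_of_ord (inord 1 : 'I_3)); rewrite inordK. Qed.
Lemma mk3_2 x y z : co (mk3 x y z) 2 = z. Proof. by rewrite /co mxE; change (\val (inord 2 : 'I_3)) with (nat_of_ord (inord 2 : 'I_3)); rewrite inordK. Qed.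

Lemma vec_eq (a b : 'rV[C]_3) : co a 0 = co b 0 -> co a 1 = co b 1 -> co a 2 = co b 2 -> a = b.
Proof.
move=> h0 h1 h2; apply/rowP => j; rewrite !coE.
by case: j => [[|[|[|j]]] hj] //=.
Qed.

Lemma co_scale l a k : co (l *: a) k = l * co a k. Proof. by rewrite /co mxE. Qed.
Lemma co_add a b k : co (a + b) k = co a k + co b k. Proof. by rewrite /co mxE. Qed.
Lemma co_opp a k : co (- a) k = - co a k. Proof. by rewrite /co mxE. Qed.
Lemma co_sub a b k : co (a - b) k = co a k - co b k. Proof. by rewrite /co !mxE. Qed.
Lemma co_zero k : co 0 k = 0. Proof. by rewrite /co mxE. Qed.

Lemma vec_nz (a : 'rV[C]_3) : a != 0 -> co a 0 != 0 \/ co a 1 != 0 \/ co a 2 != 0.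
Proof.
move=> h; case: (eqVneq (co a 0) 0) => h0; last by left.
case: (eqVneq (co a 1) 0) => h1; last by right; left.
case: (eqVneq (co a 2) 0) => h2; last by right; right.
by move/negP: h; case; apply/eqP; apply: vec_eq; rewrite co_zero.
Qed.

Lemma dotE a b : dot a b = co a 0 * co b 0 + co a 1 * co b 1 + co a 2 * co b 2.
Proof.
rewrite /dot !big_ord_recr big_ord0 /= !coE; nrm; cring.
Qed.

Lemma det3E a b c : det3 a b c = co a 0 * (co b 1 * co c 2 - co b 2 * co c 1)
  - co a 1 * (co b 0 * co c 2 - co b 2 * co c 0) + co a 2 * (co b 0 * co c 1 - co b 1 * co c 0).
Proof.
rewrite /det3 det33 !mxE.
repeat match goal with |- context [nth ?d ?l ?k] => let k' := eval vm_compute in k in progress change (nth d l k) with (nth d l k') end.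
rewrite /= !coE; nrm; cring.
Qed.

Definition cross (a b : 'rV[C]_3) : 'rV[C]_3 :=
  mk3 (co a 1 * co b 2 - co a 2 * co b 1) (co a 2 * co b 0 - co a 0 * co b 2) (co a 0 * co b 1 - co a 1 * co b 0).

Ltac coS := repeat progress rewrite ?co_scale ?co_add ?co_sub ?co_opp ?co_zero ?mk3_0 ?mk3_1 ?mk3_2.
Ltac veq := apply: vec_eq; rewrite /cross; coS; cring.


Implicit Types (a b c x y z w p u v : 'rV[C]_3) (l : C).
Lemma dotC a b : dot a b = dot b a. Proof. rewrite !dotE; cring. Qed.
Lemma dot_scale_l l a b : dot (l *: a) b = l * dot a b. Proof. rewrite !dotE; coS; cring. Qed.
Lemma dot_scale_r l a b : dot a (l *: b) = l * dot a b. Proof. rewrite !dotE; coS; cring. Qed.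
Lemma det3_dot a b c : det3 a b c = dot c (cross a b). Proof. rewrite det3E dotE /cross; coS; cring. Qed.
Lemma dot_cross_l a b : dot a (cross a b) = 0. Proof. rewrite dotE /cross; coS; cring. Qed.
Lemma dot_cross_r a b : dot b (cross a b) = 0. Proof. rewrite dotE /cross; coS; cring. Qed.
Lemma det3_cyc a b c : det3 a b c = det3 b c a. Proof. rewrite !det3E; cring. Qed.
Lemma det3_swap a b c : det3 a b c = - det3 a c b. Proof. rewrite !det3E; cring. Qed.
Lemma det3_aab a b : det3 a a b = 0. Proof. rewrite !det3E; cring. Qed.
Lemma det3_abb a b : det3 a b b = 0. Proof. rewrite !det3E; cring. Qed.
Lemma det3_aba a b : det3 a b a = 0. Proof. rewrite !det3E; cring. Qed.
Lemma cross_anti a b : cross b a = - cross a b. Proof. veq. Qed.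
Lemma cross_self_scale l a : cross a (l *: a) = 0. Proof. veq. Qed.
Lemma cross_scale_l l a b : cross (l *: a) b = l *: cross a b. Proof. veq. Qed.
Lemma cross_scale_r l a b : cross a (l *: b) = l *: cross a b. Proof. veq. Qed.
Lemma cross_triple x y p : cross (cross x y) p = dot x p *: y - dot y p *: x.
Proof. apply: vec_eq; rewrite /cross !dotE; coS; cring. Qed.

Lemma cross0_minor a b : cross a b = 0 ->
  forall j k, (j < 3)%N -> (k < 3)%N -> co a j * co b k = co a k * co b j.
Proof.
move=> h.
have h0 : co a 1 * co b 2 - co a 2 * co b 1 = 0 by rewrite -(co_zero 0) -h /cross mk3_0.
have h1 : co a 2 * co b 0 - co a 0 * co b 2 = 0 by rewrite -(co_zero 1) -h /cross mk3_1.
have h2 : co a 0 * co b 1 - co a 1 * co b 0 = 0 by rewrite -(co_zero 2) -h /cross mk3_2.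
move=> j k hj hk; apply/eqP; rewrite -subr_eq0; apply/eqP.
case: j hj => [|[|[|j]]] // _; case: k hk => [|[|[|k]]] // _;
 first [ cring
       | lazymatch type of h0 with ?E = 0 => (transitivity E; [cring | exact h0]) end
       | lazymatch type of h1 with ?E = 0 => (transitivity E; [cring | exact h1]) end
       | lazymatch type of h2 with ?E = 0 => (transitivity E; [cring | exact h2]) end
       | lazymatch type of h0 with ?E = 0 => (transitivity (- E); [cring | by rewrite h0 oppr0]) end
       | lazymatch type of h1 with ?E = 0 => (transitivity (- E); [cring | by rewrite h1 oppr0]) end
       | lazymatch type of h2 with ?E = 0 => (transitivity (- E); [cring | by rewrite h2 oppr0]) end ].
Qed.

Lemma cross0_prop a b : a != 0 -> cross a b = 0 -> exists l, b = l *: a.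
Proof.
move=> anz h; have mn := @cross0_minor a b h.
have key : forall k, (k < 3)%N -> co a k != 0 -> exists l, b = l *: a.
  move=> k hk ak; exists (co b k / co a k).
  have hj : forall j, (j < 3)%N -> co b j = co (co b k / co a k *: a) j.
    move=> j hj; rewrite co_scale; apply: (mulIf ak).
    by rewrite mulrAC divfK // mulrC mn // mulrC.
  by apply: vec_eq; apply: hj.
by case: (vec_nz anz) => [h0|[h1|h2]]; [apply: (key 0%N)|apply: (key 1%N)|apply: (key 2%N)].
Qed.

Lemma perp_cross x y p : cross x y != 0 -> dot x p = 0 -> dot y p = 0 ->
  exists l, p = l *: cross x y.
Proof.
move=> hxy hx hy; apply: cross0_prop => //.
by rewrite cross_triple hx hy !scale0r subr0.
Qed.

Lemma cross_nz_nz a b : cross a b != 0 -> a != 0.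
Proof. apply: contra => /eqP ->; apply/eqP; veq. Qed.

Lemma lemL x y z w : cross x y != 0 -> cross z w != 0 ->
  (cross (cross x y) (cross z w) = 0 <-> (det3 x y z = 0 /\ det3 x y w = 0)).
Proof.
move=> hxy hzw; split.
  move=> h; have [l hl] := @cross0_prop _ _ hxy h.
  have lnz : l != 0 by apply: contraNneq hzw => l0; rewrite hl l0 scale0r.
  rewrite !det3_dot; split.
    have := dot_cross_l z w; rewrite hl dot_scale_r => /eqP; rewrite mulf_eq0 (negPf lnz) /=.
    by move/eqP.
  have := dot_cross_r z w; rewrite hl dot_scale_r => /eqP; rewrite mulf_eq0 (negPf lnz) /=.
  by move/eqP.
rewrite !det3_dot => -[h1 h2].
have [l hl] := @perp_cross _ _ _ hzw h1 h2.
by rewrite hl cross_anti cross_self_scale oppr0.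
Qed.


Lemma detE a b c : det3 a b c = 0 <->
  exists p, p != 0 /\ dot a p = 0 /\ dot b p = 0 /\ dot c p = 0.
Proof.
set M := \matrix_(r < 3, s < 3) (nth 0 [:: a; b; c] r) 0 s.
have hM : forall (v : 'rV[C]_3) (r : 'I_3), (v *m M^T) 0 r = dot (nth 0 [:: a; b; c] r) v.
  move=> v r; rewrite !mxE /dot; apply: eq_bigr => j _; rewrite !mxE mulrC //.
rewrite /det3 -/M -det_tr; split.
  move/eqP/det0P => [v vnz hv]; exists v; split => //.
  have hr : forall r : 'I_3, dot (nth 0 [:: a; b; c] r) v = 0.
    by move=> r; rewrite -hM hv mxE.
  by split; [apply: (hr 0) | split; [apply: (hr 1) | apply: (hr 2)]].
move=> [p [pnz [ha [hb hc]]]]; apply/eqP/det0P; exists p => //.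
apply/rowP => r; rewrite hM mxE.
by case: r => [[|[|[|r]]] hr] //=.
Qed.


Definition ispoly (h : C -> C) := exists q : {poly C}, forall s, h s = q.[s].
Lemma ip_const (c0 : C) : ispoly (fun _ => c0). Proof. by exists c0%:P => s; rewrite hornerC. Qed.
Lemma ip_ext f g : (forall s, f s = g s) -> ispoly f -> ispoly g.
Proof. by move=> e [q hq]; exists q => s; rewrite -e. Qed.
Lemma ip_id : ispoly (fun s => s). Proof. by exists 'X => s; rewrite hornerX. Qed.
Lemma ip_add f g : ispoly f -> ispoly g -> ispoly (fun s => f s + g s).
Proof. by move=> [p hp] [q hq]; exists (p + q) => s; rewrite hornerD hp hq. Qed.
Lemma ip_mul f g : ispoly f -> ispoly g -> ispoly (fun s => f s * g s).
Proof. by move=> [p hp] [q hq]; exists (p * q) => s; rewrite hornerM hp hq. Qed.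
Lemma ip_opp f : ispoly f -> ispoly (fun s => - f s).
Proof. by move=> [p hp]; exists (- p) => s; rewrite hornerN hp. Qed.
Lemma ip_sub f g : ispoly f -> ispoly g -> ispoly (fun s => f s - g s).
Proof. by move=> hf hg; apply: ip_add => //; apply: ip_opp. Qed.

Definition pvec (v : C -> 'rV[C]_3) :=
  [/\ ispoly (fun s => co (v s) 0), ispoly (fun s => co (v s) 1) & ispoly (fun s => co (v s) 2)].
Lemma pv_mk3 (x y z : C -> C) : ispoly x -> ispoly y -> ispoly z -> pvec (fun s => mk3 (x s) (y s) (z s)).
Proof.
move=> hx hy hz; split.
- by case: hx => q hq; exists q => s; rewrite mk3_0.
- by case: hy => q hq; exists q => s; rewrite mk3_1.
- by case: hz => q hq; exists q => s; rewrite mk3_2.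
Qed.
Lemma pv_ext (v w : C -> 'rV[C]_3) : (forall s, v s = w s) -> pvec v -> pvec w.
Proof. by move=> e [h0 h1 h2]; split; [case: h0|case: h1|case: h2] => q hq; exists q => s; rewrite -e. Qed.
Lemma pv_co (v : C -> 'rV[C]_3) k : pvec v -> (k < 3)%N -> ispoly (fun s => co (v s) k).
Proof. by case=> h0 h1 h2; case: k => [|[|[|k]]]. Qed.
Lemma pv_const (a : 'rV[C]_3) : pvec (fun _ => a).
Proof. by split; apply: ip_const. Qed.
Ltac pvs v := apply: (@pv_ext (fun s => mk3 (co (v s) 0) (co (v s) 1) (co (v s) 2))); [by move=> s; apply: vec_eq; coS|].
Lemma pv_cross (v w : C -> 'rV[C]_3) : pvec v -> pvec w -> pvec (fun s => cross (v s) (w s)).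
Proof.
move=> [a0 a1 a2] [b0 b1 b2]; apply: pv_mk3; apply: ip_sub; apply: ip_mul => //.
Qed.
Lemma pv_scale (l : C -> C) (v : C -> 'rV[C]_3) : ispoly l -> pvec v -> pvec (fun s => l s *: v s).
Proof.
move=> hl [a0 a1 a2]; split.
- by apply: (ip_ext (f := fun s => l s * co (v s) 0)) => [s|]; [rewrite co_scale | apply: ip_mul].
- by apply: (ip_ext (f := fun s => l s * co (v s) 1)) => [s|]; [rewrite co_scale | apply: ip_mul].
- by apply: (ip_ext (f := fun s => l s * co (v s) 2)) => [s|]; [rewrite co_scale | apply: ip_mul].
Qed.
Lemma pv_add (v w : C -> 'rV[C]_3) : pvec v -> pvec w -> pvec (fun s => v s + w s).
Proof.
move=> [a0 a1 a2] [b0 b1 b2]; split.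
- by apply: (ip_ext (f := fun s => co (v s) 0 + co (w s) 0)) => [s|]; [rewrite co_add | apply: ip_add].
- by apply: (ip_ext (f := fun s => co (v s) 1 + co (w s) 1)) => [s|]; [rewrite co_add | apply: ip_add].
- by apply: (ip_ext (f := fun s => co (v s) 2 + co (w s) 2)) => [s|]; [rewrite co_add | apply: ip_add].
Qed.
Lemma pv_sub (v w : C -> 'rV[C]_3) : pvec v -> pvec w -> pvec (fun s => v s - w s).
Proof.
move=> hv hw; apply: (pv_ext (v := fun s => v s + (-1) *: w s)).
  by move=> s; rewrite scaleN1r.
by apply: pv_add => //; apply: pv_scale => //; apply: ip_const.
Qed.
Lemma ip_dot (v w : C -> 'rV[C]_3) : pvec v -> pvec w -> ispoly (fun s => dot (v s) (w s)).
Proof.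
move=> [a0 a1 a2] [b0 b1 b2].
apply: (ip_ext (f := fun s => co (v s) 0 * co (w s) 0 + co (v s) 1 * co (w s) 1 + co (v s) 2 * co (w s) 2)).
  by move=> s; rewrite dotE.
by repeat apply: ip_add; apply: ip_mul.
Qed.
Lemma ip_det3 (u v w : C -> 'rV[C]_3) : pvec u -> pvec v -> pvec w -> ispoly (fun s => det3 (u s) (v s) (w s)).
Proof.
move=> hu hv hw; apply: (ip_ext (f := fun s => dot (w s) (cross (u s) (v s)))).
  by move=> s; rewrite det3_dot.
by apply: ip_dot => //; apply: pv_cross.
Qed.

Definition generic (P : C -> Prop) :=
  exists h, ispoly h /\ h 0 != 0 /\ forall s, h s != 0 -> P s.
Lemma gen_true (P : C -> Prop) : (forall s, P s) -> generic P.
Proof. by move=> hP; exists (fun _ => 1); split; [apply: ip_const | rewrite oner_eq0]. Qed.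
Lemma gen_and (P Q : C -> Prop) : generic P -> generic Q -> generic (fun s => P s /\ Q s).
Proof.
move=> [h [ih [h0 hP]]] [g [ig [g0 hQ]]]; exists (fun s => h s * g s); split; first exact: ip_mul.
split; first by rewrite mulf_neq0.
by move=> s; rewrite mulf_eq0 negb_or => /andP [a b]; split; [apply: hP|apply: hQ].
Qed.
Lemma gen_mono (P Q : C -> Prop) : (forall s, P s -> Q s) -> generic P -> generic Q.
Proof. by move=> hPQ [h [ih [h0 hP]]]; exists h; split => // ; split => // s /hP /hPQ. Qed.
Lemma gen_nz h : ispoly h -> h 0 != 0 -> generic (fun s => h s != 0).
Proof. by move=> ih h0; exists h. Qed.
Lemma gen_vec (v : C -> 'rV[C]_3) : pvec v -> v 0 != 0 -> generic (fun s => v s != 0).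
Proof.
move=> [a0 a1 a2] vnz; case: (vec_nz vnz) => [h|[h|h]].
- by apply: gen_mono (gen_nz a0 h) => s; apply: contra => /eqP ->; rewrite co_zero.
- by apply: gen_mono (gen_nz a1 h) => s; apply: contra => /eqP ->; rewrite co_zero.
- by apply: gen_mono (gen_nz a2 h) => s; apply: contra => /eqP ->; rewrite co_zero.
Qed.
Lemma gen_list (T : eqType) (l : seq T) (P : T -> C -> Prop) :
  (forall t : T, t \in l -> generic (P t)) -> generic (fun s => forall t : T, t \in l -> P t s).
Proof.
elim: l => [|y l IH] hl; first by apply: gen_true.
have hl' : forall t : T, t \in l -> generic (P t).
  by move=> x hx; apply: hl; rewrite in_cons hx orbT.
apply: gen_mono (gen_and (hl y (mem_head _ _)) (IH hl')).
by move=> s [hy hr] t; rewrite in_cons => /orP [/eqP ->|/hr].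
Qed.
Lemma gen_fin (T : finType) (P : T -> C -> Prop) :
  (forall t : T, generic (P t)) -> generic (fun s => forall t : T, P t s).
Proof.
move=> h; have := @gen_list T (enum T) P (fun (t0 : T) _ => h t0).
by apply: gen_mono => s hs t; apply: hs; rewrite mem_enum.
Qed.

Lemma poly_nonroot (q : {poly C}) : q != 0 -> exists s, q.[s] != 0.
Proof.
move=> qnz; apply: NNPP => hn.
have hall : forall s, q.[s] = 0 by move=> s; apply: NNPP => hs; apply: hn; exists s; apply/eqP.
set rs := [seq (i%:R : C) | i <- iota 0 (size q)].
have h1 : all (root q) rs by apply/allP => x0 /mapP [i _ ->]; rewrite /root hall.
have h2 : uniq rs.
  by rewrite map_inj_uniq ?iota_uniq // => i j /eqP; rewrite eqr_nat => /eqP.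
by have := max_poly_roots qnz h1 h2; rewrite size_map size_iota ltnn.
Qed.

Lemma three_nonroot f g h (a1 a2 a3 : C) : ispoly f -> ispoly g -> ispoly h ->
  f a1 != 0 -> g a2 != 0 -> h a3 != 0 -> exists s, [/\ f s != 0, g s != 0 & h s != 0].
Proof.
move=> [p hp] [q hq] [r hr]; rewrite hp hq hr => n1 n2 n3.
have pnz : p != 0 by apply: contraNneq n1 => ->; rewrite horner0.
have qnz : q != 0 by apply: contraNneq n2 => ->; rewrite horner0.
have rnz : r != 0 by apply: contraNneq n3 => ->; rewrite horner0.
have [s hs] := poly_nonroot (mulf_neq0 (mulf_neq0 pnz qnz) rnz).
exists s; move: hs; rewrite !hornerM !mulf_eq0 !negb_or hp hq hr => /andP [/andP [-> ->] ->].
by [].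
Qed.

Lemma R6 (u v p : 'rV[C]_3) : dot (dot u p *: v - dot v p *: u) p = 0.
Proof. rewrite !dotE; coS; cring. Qed.

Lemma exists_dot (v : 'rV[C]_3) : v != 0 -> exists u, dot u v != 0.
Proof.
move=> vnz; case: (vec_nz vnz) => h.
  by exists (mk3 1 0 0); have -> : dot (mk3 1 0 0) v = co v 0 by rewrite dotE; coS; cring.
case: h => h.
  by exists (mk3 0 1 0); have -> : dot (mk3 0 1 0) v = co v 1 by rewrite dotE; coS; cring.
by exists (mk3 0 0 1); have -> : dot (mk3 0 0 1) v = co v 2 by rewrite dotE; coS; cring.
Qed.

Lemma sp_cross (x y : 'rV[C]_3) : same_point x y -> cross x y = 0.
Proof. by move=> [_ [_ [l ->]]]; apply: cross_self_scale. Qed.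

Lemma det_neq_same (x y : 'rV[C]_3) : x != 0 -> cross x y != 0 -> ~ same_point x y.
Proof. by move=> _ h /sp_cross e; move/eqP: h. Qed.

Section Arr.
Variable n : nat.
Variable H : 'I_n -> 'rV[C]_3.
Hypothesis H_nz : forall i, H i != 0.
Hypothesis H_distinct : forall i j, i != j -> ~ same_point (H i) (H j).
Hypothesis H_mult : forall t : 'I_n, meet_mult_le2 H t.

Definition PR (m : nat) (X : 'I_n -> 'rV[C]_3) : Prop :=
  [/\ forall i : 'I_n, (i < m)%N -> X i != 0,
      forall i j : 'I_n, (i < m)%N -> (j < m)%N -> i != j -> cross (X i) (X j) != 0 &
      forall i j k : 'I_n, (i < m)%N -> (j < m)%N -> (k < m)%N ->
        (det3 (X i) (X j) (X k) == 0) = (det3 (H i) (H j) (H k) == 0)].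

Lemma PR_mono m m' (X : 'I_n -> 'rV[C]_3) : (m' <= m)%N -> PR m X -> PR m' X.
Proof.
move=> hm [h1 h2 h3]; split.
- by move=> i hi; apply: h1; apply: leq_trans hm.
- by move=> i j hi hj; apply: h2; apply: leq_trans hm.
- by move=> i j k hi hj hk; apply: h3; apply: leq_trans hm.
Qed.

Lemma H_cross i j : i != j -> cross (H i) (H j) != 0.
Proof.
move=> hij; apply/negP => /eqP h; apply: (H_distinct hij).
have [l hl] := cross0_prop (H_nz i) h.
by split; [apply: H_nz | split; [apply: H_nz | exists l]].
Qed.

Lemma PR_H m : PR m H.
Proof. by split => // i j _ _; apply: H_cross. Qed.

Lemma patt_all m (X : 'I_n -> 'rV[C]_3) :
  (forall i j k : 'I_n, (i < m)%N -> (j < m)%N -> (k < m)%N -> i != j -> j != k -> i != k ->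
        (det3 (X i) (X j) (X k) == 0) = (det3 (H i) (H j) (H k) == 0)) ->
  forall i j k : 'I_n, (i < m)%N -> (j < m)%N -> (k < m)%N ->
        (det3 (X i) (X j) (X k) == 0) = (det3 (H i) (H j) (H k) == 0).
Proof.
move=> h i j k hi hj hk.
case: (eqVneq i j) => [->|ij]; first by rewrite !det3_aab eqxx.
case: (eqVneq j k) => [->|jk]; first by rewrite !det3_abb eqxx.
case: (eqVneq i k) => [->|ik]; first by rewrite !det3_aba eqxx.
by apply: h.
Qed.

Lemma inc_iff (i j k : 'I_n) : i != j -> j != k -> i != k ->
  (incidence H [set i; j; k] <-> det3 (H i) (H j) (H k) = 0).
Proof.
move=> ij jk ik; rewrite detE; split.
  move=> [_ [p [pnz hp]]]; exists p; split => //.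
  by split; [apply: hp; rewrite !inE eqxx | split; apply: hp; rewrite !inE eqxx ?orbT].
move=> [p [pnz [ha [hb hc]]]]; split.
  rewrite -setUA !cardsU1 cards1 !inE (negPf ij) (negPf ik) (negPf jk) //.
exists p; split => // x; rewrite !inE => /orP [/orP [/eqP ->|/eqP ->]|/eqP ->] //.
Qed.

Lemma real_PR (X : 'I_n -> 'rV[C]_3) : realization (incidence H) X -> PR n X.
Proof.
move=> [h1 [h2 h3]]; split.
- by move=> i _; apply: h1.
- move=> i j _ _ ij; apply/negP => /eqP e; apply: (h2 _ _ ij).
  have [l hl] := cross0_prop (h1 i) e.
  by split; [apply: h1 | split; [apply: h1 | exists l]].
- apply: patt_all => i j k _ _ _ ij jk ik.
  apply/eqP/eqP => e.
    by apply/(inc_iff ij jk ik); apply/(h3 _ _ _ ij jk ik).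
  by apply/(h3 _ _ _ ij jk ik); apply/(inc_iff ij jk ik).
Qed.

Lemma PR_real (X : 'I_n -> 'rV[C]_3) : PR n X -> realization (incidence H) X.
Proof.
move=> [h1 h2 h3]; split; first by move=> i; apply: h1.
split.
  by move=> i j ij; apply: det_neq_same; [apply: h1 | apply: h2].
move=> i j k ij jk ik; split => e.
  by apply/(inc_iff ij jk ik); apply/eqP; rewrite -h3 //; apply/eqP.
by apply/eqP; rewrite h3 //; apply/eqP; apply/(inc_iff ij jk ik).
Qed.


Lemma transfer m (X : 'I_n -> 'rV[C]_3) (a b c d : 'I_n) : PR m X -> (a < m)%N -> (b < m)%N -> (c < m)%N -> (d < m)%N ->
  a != b -> c != d ->
  (cross (cross (X a) (X b)) (cross (X c) (X d)) == 0) =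
  (cross (cross (H a) (H b)) (cross (H c) (H d)) == 0).
Proof.
move=> [h1 h2 h3] ha hb hc hd ab cd.
have e1 := lemL (h2 _ _ ha hb ab) (h2 _ _ hc hd cd).
have e2 := lemL (H_cross ab) (H_cross cd).
apply/eqP/eqP => h.
  apply/e2; have [k1 k2] := e1.1 h.
  by split; apply/eqP; rewrite -h3 //; apply/eqP.
apply/e1; have [k1 k2] := e2.1 h.
by split; apply/eqP; rewrite h3 //; apply/eqP.
Qed.

Section Step.
Variables G1 G2 : 'I_n -> 'rV[C]_3.
Hypothesis hG1 : PR n G1.
Hypothesis hG2 : PR n G2.

Definition pcurve (g : C -> 'I_n -> 'rV[C]_3) := forall i, pvec (fun s => g s i).

Definition Inv m := exists g, [/\ pcurve g,
  forall i : 'I_n, (i < m)%N -> g 0 i = G1 i /\ g 1 i = G2 i &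
  generic (fun s => PR m (g s))].

Lemma step_gen m (hm : (m < n)%N) (g : C -> 'I_n -> 'rV[C]_3) (w : C -> 'rV[C]_3) :
  let t := Ordinal hm in
  pcurve g -> (forall i : 'I_n, (i < m)%N -> g 0 i = G1 i /\ g 1 i = G2 i) ->
  generic (fun s => PR m (g s)) ->
  pvec w -> w 0 = G1 t -> w 1 = G2 t ->
  generic (fun s => PR m (g s) -> forall i j : 'I_n, (i < m)%N -> (j < m)%N ->
       det3 (H i) (H j) (H t) = 0 -> det3 (g s i) (g s j) (w s) = 0) ->
  Inv m.+1.
Proof.
move=> t pg gend genPR pw w0 w1 gcl.
have ht : forall x : 'I_n, (x < m.+1)%N -> ~~ (x < m)%N -> x = t.
  by move=> x h1 h2; apply: ord_inj => /=; apply/eqP; rewrite eqn_leq -ltnS h1 leqNgt h2.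
have tm : ~~ (t < m)%N by rewrite /= ltnn.
pose g' := fun s (i : 'I_n) => if (i < m)%N then g s i else w s.
have g't : forall s, g' s t = w s by move=> s; rewrite /g' (negPf tm).
have g'i : forall s (i : 'I_n), (i < m)%N -> g' s i = g s i by move=> s i hi; rewrite /g' hi.
exists g'; split.
- move=> i; rewrite /g'; case: (i < m)%N; [apply: pg | apply: pw].
- move=> i hi; case: (boolP (i < m)%N) => him; first by rewrite !g'i //; apply: gend.
  by rewrite (ht i hi him) !g't.
have G1t : G1 t != 0 by case: hG1 => h1 _ _; apply: h1.
have gB := gen_vec pw (eq_ind_r (fun x => x != 0) G1t w0).
have gC : generic (fun s => forall i : 'I_n, (i < m)%N -> cross (g s i) (w s) != 0).
  apply: gen_fin => i; case: (boolP (i < m)%N) => him; last by apply: gen_true.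
  apply: gen_mono (gen_vec (pv_cross (pg i) pw) _); first by move=> s h _.
  have [e0 _] := gend i him; rewrite e0 w0.
  case: hG1 => _ h2 _; apply: h2 => //.
  by apply/eqP => e; move: him; rewrite e /= ltnn.
have gD : generic (fun s => forall i j : 'I_n, (i < m)%N -> (j < m)%N ->
      det3 (H i) (H j) (H t) != 0 -> det3 (g s i) (g s j) (w s) != 0).
  apply: gen_fin => i; apply: gen_fin => j.
  case: (boolP [&& (i < m)%N, (j < m)%N & det3 (H i) (H j) (H t) != 0]).
    move=> /and3P [hi hj hd].
    apply: gen_mono (gen_nz (ip_det3 (pg i) (pg j) pw) _); first by move=> s h _ _ _.
    have [e0 _] := gend i hi; have [f0 _] := gend j hj; rewrite e0 f0 w0.
    case: hG1 => _ _ h3; rewrite h3 //; by apply: (leq_trans hi); apply: ltnW.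
  move=> hn; apply: gen_true => s /= hi hj hd; move: hn; rewrite hi hj hd.
  by [].
apply: gen_mono (gen_and genPR (gen_and gB (gen_and gC (gen_and gD gcl)))).
move=> s [[a1 a2 a3] [b [c [d e]]]].
have e' := e (And3 a1 a2 a3).
have Kd : forall i j : 'I_n, (i < m)%N -> (j < m)%N ->
    (det3 (g s i) (g s j) (w s) == 0) = (det3 (H i) (H j) (H t) == 0).
  move=> i j hi hj; case: (eqVneq (det3 (H i) (H j) (H t)) 0) => hd.
    by rewrite e' // eqxx.
  by apply/negbTE; apply: d.
have sp : forall x : 'I_n, (x < m.+1)%N -> (x < m)%N \/ x = t.
  by move=> x hx; case: (boolP (x < m)%N) => h; [left | right; apply: ht].
split.
- move=> i hi; case: (sp i hi) => [h|->]; first by rewrite g'i //; apply: a1.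
  by rewrite g't.
- move=> i j hi hj ij; case: (sp i hi) => [h1|e1]; case: (sp j hj) => [h2|e2].
  + by rewrite (g'i s i h1) (g'i s j h2); apply: a2.
  + by rewrite (g'i s i h1) e2 g't; apply: c.
  + by rewrite (g'i s j h2) e1 g't cross_anti oppr_eq0; apply: c.
  + by move: ij; rewrite e1 e2 eqxx.
- move=> i j k hi hj hk.
  case: (sp i hi) => [h1|->]; case: (sp j hj) => [h2|->]; case: (sp k hk) => [h3|->].
  + by rewrite (g'i s i h1) (g'i s j h2) (g'i s k h3); apply: a3.
  + by rewrite (g'i s i h1) (g'i s j h2) g't; apply: Kd.
  + by rewrite (g'i s i h1) (g'i s k h3) g't det3_swap oppr_eq0 [det3 (H i) _ _]det3_swap oppr_eq0 Kd.
  + by rewrite !det3_abb eqxx.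
  + by rewrite (g'i s j h2) (g'i s k h3) g't det3_cyc [det3 (H t) _ _]det3_cyc Kd.
  + by rewrite !det3_aba eqxx.
  + by rewrite !det3_aab eqxx.
  + by rewrite !det3_aab eqxx.
Qed.

Lemma pv_lerp (x y : 'rV[C]_3) : pvec (fun s => (1 - s) *: x + s *: y).
Proof.
apply: pv_add; apply: pv_scale; try apply: pv_const.
  by apply: ip_sub; [apply: ip_const | apply: ip_id].
by apply: ip_id.
Qed.
Lemma lerp0 (x y : 'rV[C]_3) : (1 - 0) *: x + 0 *: y = x.
Proof. by rewrite subr0 scale1r scale0r addr0. Qed.
Lemma lerp1 (x y : 'rV[C]_3) : (1 - 1) *: x + 1 *: y = y.
Proof. by rewrite subrr scale0r add0r scale1r. Qed.
Lemma ip_lerp (x y : C) : ispoly (fun s => (1 - s) * x + s * y).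
Proof.
apply: ip_add; apply: ip_mul; try apply: ip_const; try apply: ip_id.
by apply: ip_sub; [apply: ip_const | apply: ip_id].
Qed.

Lemma case0 m (hm : (m < n)%N) :
  (forall a b : 'I_n, (a < m)%N -> (b < m)%N -> a != b -> det3 (H a) (H b) (H (Ordinal hm)) != 0) ->
  Inv m -> Inv m.+1.
Proof.
move=> hP [g [pg gend genPR]].
apply: (step_gen (w := fun s => (1 - s) *: G1 (Ordinal hm) + s *: G2 (Ordinal hm)) pg gend genPR).
- by apply: pv_lerp.
- by rewrite lerp0.
- by rewrite lerp1.
apply: gen_true => s _ i j hi hj hd; case: (eqVneq i j) => [->|ij]; first by rewrite det3_aab.
by move: (hP i j hi hj ij); rewrite hd eqxx.
Qed.

Lemma case1 m (hm : (m < n)%N) (a b : 'I_n) :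
  (a < m)%N -> (b < m)%N -> a != b -> det3 (H a) (H b) (H (Ordinal hm)) = 0 ->
  (forall c d : 'I_n, (c < m)%N -> (d < m)%N -> c != d -> det3 (H c) (H d) (H (Ordinal hm)) = 0 ->
      cross (cross (H a) (H b)) (cross (H c) (H d)) = 0) ->
  Inv m -> Inv m.+1.
Proof.
move=> ha hb ab hab hcl [g [pg gend genPR]].
set t := Ordinal hm.
have [ea0 ea1] := gend a ha; have [eb0 eb1] := gend b hb.
pose p := fun s => cross (g s a) (g s b).
have pp : pvec p := pv_cross (pg a) (pg b).
have p0nz : p 0 != 0 by rewrite /p ea0 eb0; case: hG1 => _ h2 _; apply: h2.
have p1nz : p 1 != 0 by rewrite /p ea1 eb1; case: hG2 => _ h2 _; apply: h2.
have [u0 hu0] := exists_dot p0nz; have [u1 hu1] := exists_dot p1nz.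
pose u := fun s => (1 - s) *: u0 + s *: u1.
pose v := fun s => (1 - s) *: G1 t + s *: G2 t.
have pu : pvec u := pv_lerp u0 u1.
have pv : pvec v := pv_lerp (G1 t) (G2 t).
pose w' := fun s => dot (u s) (p s) *: v s - dot (v s) (p s) *: u s.
have pw' : pvec w' := pv_sub (pv_scale (ip_dot pu pp) pv) (pv_scale (ip_dot pv pp) pu).
have d0 : dot (G1 t) (p 0) = 0.
  by rewrite /p ea0 eb0 -det3_dot; apply/eqP; case: hG1 => _ _ h3; rewrite h3 // hab.
have d1 : dot (G2 t) (p 1) = 0.
  by rewrite /p ea1 eb1 -det3_dot; apply/eqP; case: hG2 => _ _ h3; rewrite h3 // hab.
have w'0 : w' 0 = dot u0 (p 0) *: G1 t by rewrite /w' /u /v !lerp0 d0 scale0r subr0.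
have w'1 : w' 1 = dot u1 (p 1) *: G2 t by rewrite /w' /u /v !lerp1 d1 scale0r subr0.
pose w := fun s => ((1 - s) * (dot u0 (p 0))^-1 + s * (dot u1 (p 1))^-1) *: w' s.
apply: (step_gen (w := w) pg gend genPR).
- by apply: pv_scale => //; apply: ip_lerp.
- by rewrite /w w'0 subr0 mul1r mul0r addr0 scalerA mulVf // scale1r.
- by rewrite /w w'1 subrr mul0r add0r mul1r scalerA mulVf // scale1r.
apply: gen_true => s hPR i j hi hj hd.
case: (eqVneq i j) => [->|ij]; first by rewrite det3_aab.
have hc := hcl i j hi hj ij hd.
have := transfer hPR ha hb hi hj ab ij; rewrite hc eqxx => /eqP hc'.
have pnz : p s != 0 by case: hPR => _ h2 _; apply: h2.
have [l hl] := cross0_prop pnz hc'.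
by rewrite det3_dot hl dot_scale_r /w dot_scale_l /w' R6 !mulr0.
Qed.

Lemma onpt m (hm : (m < n)%N) (x y : 'I_n) : (x < m)%N -> (y < m)%N -> x != y ->
  det3 (H x) (H y) (H (Ordinal hm)) = 0 ->
  dot (H (Ordinal hm)) (cross (H x) (H y)) = 0 /\ in_mult H (Ordinal hm) (cross (H x) (H y)).
Proof.
move=> hx hy xy hd; split; first by rewrite -det3_dot.
split; first by apply: H_cross.
exists x, y, (Ordinal hm); split; first by split => //=; apply: ltnW.
split; first split => //.
- by apply/eqP => e; move: hy; rewrite e /= ltnn.
- by apply/eqP => e; move: hx; rewrite e /= ltnn.
split; [apply: dot_cross_l | apply: dot_cross_r | by rewrite -det3_dot].
Qed.

Lemma case2 m (hm : (m < n)%N) (a b c d : 'I_n) :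
  (a < m)%N -> (b < m)%N -> a != b -> det3 (H a) (H b) (H (Ordinal hm)) = 0 ->
  (c < m)%N -> (d < m)%N -> c != d -> det3 (H c) (H d) (H (Ordinal hm)) = 0 ->
  cross (cross (H a) (H b)) (cross (H c) (H d)) != 0 ->
  Inv m -> Inv m.+1.
Proof.
move=> ha hb ab hab hc hd cd hcd hne [g [pg gend genPR]].
set t := Ordinal hm.
have [ea0 ea1] := gend a ha; have [eb0 eb1] := gend b hb.
have [ec0 ec1] := gend c hc; have [ed0 ed1] := gend d hd.
pose p := fun s => cross (g s a) (g s b).
pose q := fun s => cross (g s c) (g s d).
have pp : pvec p := pv_cross (pg a) (pg b).
have pq : pvec q := pv_cross (pg c) (pg d).
pose w' := fun s => cross (p s) (q s).
have pw' : pvec w' := pv_cross pp pq.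
have endp : forall G : 'I_n -> 'rV[C]_3, PR n G -> exists l,
    G t = l *: cross (cross (G a) (G b)) (cross (G c) (G d)).
  move=> G hG.
  have hPQ : cross (cross (G a) (G b)) (cross (G c) (G d)) != 0.
    by rewrite (transfer (PR_mono (ltnW hm) hG) ha hb hc hd ab cd).
  have dP : dot (cross (G a) (G b)) (G t) = 0.
    by rewrite dotC -det3_dot; apply/eqP; case: hG => _ _ h3; rewrite h3 // hab.
  have dQ : dot (cross (G c) (G d)) (G t) = 0.
    by rewrite dotC -det3_dot; apply/eqP; case: hG => _ _ h3; rewrite h3 // hcd.
  exact: perp_cross hPQ dP dQ.
have [l0 hl0] := endp G1 hG1.
have [l1 hl1] := endp G2 hG2.
pose w := fun s => ((1 - s) * l0 + s * l1) *: w' s.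
apply: (step_gen (w := w) pg gend genPR).
- by apply: pv_scale => //; apply: ip_lerp.
- by rewrite /w /w' /p /q ea0 eb0 ec0 ed0 subr0 mul1r mul0r addr0 -hl0.
- by rewrite /w /w' /p /q ea1 eb1 ec1 ed1 subrr mul0r add0r mul1r -hl1.
apply: gen_true => s hPR i j hi hj hdij.
case: (eqVneq i j) => [->|ij]; first by rewrite det3_aab.
have [o1 m1] := onpt (hm := hm) ha hb ab hab.
have [o2 m2] := onpt (hm := hm) hc hd cd hcd.
have [o3 m3] := onpt (hm := hm) hi hj ij hdij.
have pnz : p s != 0 by case: hPR => _ h2 _; apply: h2.
have qnz : q s != 0 by case: hPR => _ h2 _; apply: h2.
case: (H_mult (conj o1 m1) (conj o2 m2) (conj o3 m3)) => [/sp_cross e|[/sp_cross e|/sp_cross e]].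
- by move: hne; rewrite e eqxx.
- have := transfer hPR ha hb hi hj ab ij; rewrite e eqxx => /eqP hc'.
  have [l hl] := cross0_prop pnz hc'.
  by rewrite det3_dot hl dot_scale_r /w dot_scale_l /w' dotC dot_cross_l !mulr0.
- have := transfer hPR hc hd hi hj cd ij; rewrite e eqxx => /eqP hc'.
  have [l hl] := cross0_prop qnz hc'.
  by rewrite det3_dot hl dot_scale_r /w dot_scale_l /w' dotC dot_cross_r !mulr0.
Qed.

Lemma Inv_all m : (m <= n)%N -> Inv m.
Proof.
elim: m => [_|m IH hm].
  exists (fun _ _ => 0); split => //.
  - by move=> i; apply: pv_const.
  - by apply: gen_true => s; split.
have inv := IH (ltnW hm).
case: (classic (exists a b : 'I_n, [/\ (a < m)%N, (b < m)%N, a != b &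
          det3 (H a) (H b) (H (Ordinal hm)) = 0])) => [[a [b [ha hb ab hab]]]|hno].
  case: (classic (exists c d : 'I_n, [/\ (c < m)%N, (d < m)%N, c != d,
          det3 (H c) (H d) (H (Ordinal hm)) = 0 &
          cross (cross (H a) (H b)) (cross (H c) (H d)) != 0])) => [[c [d [hc hd cd hcd hne]]]|hno2].
    exact: (case2 ha hb ab hab hc hd cd hcd hne inv).
  apply: (case1 ha hb ab hab _ inv) => c d hc hd cd hcd.
  apply/eqP; apply: NNPP => hn; apply: hno2; exists c, d; split => //; exact/negP.
apply: (case0 _ inv) => a b ha hb ab; apply/negP => /eqP e; apply: hno; exists a, b; by split.
Qed.


End Step.
Lemma pf_poly (f : ('I_n -> 'rV[C]_3) -> C) (g : C -> 'I_n -> 'rV[C]_3) :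
  polyfun f -> pcurve g -> ispoly (fun s => f (g s)).
Proof.
move=> hf pg; elim: hf.
- by move=> c0; apply: ip_const.
- move=> i j; apply: (ip_ext (f := fun s => co (g s i) (val j))).
    by move=> s; rewrite coE.
  by apply: pv_co; [apply: pg | apply: ltn_ord].
- by move=> f1 f2 _ h1 _ h2; apply: ip_add.
- by move=> f1 f2 _ h1 _ h2; apply: ip_mul.
Qed.

Lemma irr_main : @irreducible C n (realization (incidence H)).
Proof.
split; first by exists H; apply: PR_real; apply: PR_H.
move=> Z1 Z2 [_ [F1 [hF1 hZ1]]] [_ [F2 [hF2 hZ2]]] hcov.
apply: NNPP => hn.
have [G1 [rG1 nZ1]] : exists G, realization (incidence H) G /\ ~ Z1 G.
  apply: NNPP => h; apply: hn; left => G rG; apply: NNPP => nz; apply: h; exists G; by split.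
have [G2 [rG2 nZ2]] : exists G, realization (incidence H) G /\ ~ Z2 G.
  apply: NNPP => h; apply: hn; right => G rG; apply: NNPP => nz; apply: h; exists G; by split.
have pG1 := real_PR rG1; have pG2 := real_PR rG2.
have [g [pg gend [h [ih [h0 hh]]]]] := Inv_all pG1 pG2 (leqnn n).
have g0 : g 0 = G1 by apply: functional_extensionality => i; have [e _] := gend i (ltn_ord i).
have g1 : g 1 = G2 by apply: functional_extensionality => i; have [_ e] := gend i (ltn_ord i).
have [f1 [F1f1 f1nz]] : exists f, F1 f /\ f G1 != 0.
  apply: NNPP => hx; apply: nZ1; apply/(hZ1 _ rG1.1) => f Ff.
  by apply: NNPP => ne; apply: hx; exists f; split => //; apply/eqP.
have [f2 [F2f2 f2nz]] : exists f, F2 f /\ f G2 != 0.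
  apply: NNPP => hx; apply: nZ2; apply/(hZ2 _ rG2.1) => f Ff.
  by apply: NNPP => ne; apply: hx; exists f; split => //; apply/eqP.
have if1 := pf_poly (hF1 _ F1f1) pg.
have if2 := pf_poly (hF2 _ F2f2) pg.
have [s [hs1 hs2 hs3]] := three_nonroot (a1 := 0) (a2 := 0) (a3 := 1) ih if1 if2 h0
   (eq_ind_r (fun X => f1 X != 0) f1nz g0) (eq_ind_r (fun X => f2 X != 0) f2nz g1).
have rs := PR_real (hh s hs1).
case: (hcov _ rs) => hz.
  by move: hs2; rewrite (proj1 (hZ1 _ rs.1) hz f1 F1f1) eqxx.
by move: hs3; rewrite (proj1 (hZ2 _ rs.1) hz f2 F2f2) eqxx.
Qed.

End Arr.

End Main.

Theorem mainTheorem2 (C : numClosedFieldType) (n : nat) (H : 'I_n -> 'rV[C]_3)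
  (H_nz : forall i, H i != 0)
  (H_distinct : forall i j, i != j -> ~ same_point (H i) (H j))
  (H_mult : forall t : 'I_n, meet_mult_le2 H t) :
  @irreducible C n (realization (incidence H)).
Proof. exact: irr_main H_nz H_distinct H_mult. Qed.
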